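(* Define, for $z=(p,\tilde\theta)\in\mathbb{R}^n\times\mathbb{R}^{|\mathcal E|}$ and $\sigma=(\lambda,\eta,\nu)\in\mathbb{R}\times\mathbb{R}^{2|\mathcal E|}\times\mathbb{R}^n$, \[ \hat L(z,\sigma)=\sum_{j=1}^n J_j(p_j)-\tfrac12\nu^TD\nu+\nu^T(p-d-CB\tilde\theta)-\lambda\mathbf 1^T(p-d)+\eta^T\big(H^T(p-d)-F\big), \] and the closed-loop system \[ T^z\dot z=-\nabla_z\hat L(z,\sigma),\qquad T^\sigma\dot\sigma=\big[\nabla_\sigma\hat L(z,\sigma)\big]^+_\eta, \] where $T^z,T^\sigma$ are diagonal matrices with positive diagonal entries and the projection acts only on the $\eta$-components. Let $(z^*,\sigma^* )$, with $\eta^*\ge0$, be an equilibrium of this system. If a trajectory $(z(t),\sigma(t))$ of the system with $\eta(0)\ge0$ satisfies $\hat L(z^*,\sigma(t))\equiv\hat L(z^*,\sigma^* )$ and $\hat L(z(t),\sigma^* )\equiv\hat L(z^*,\sigma^* )$ for all $t\ge0$, then $\dot z\equiv0$ and $\dot\sigma\equiv0$.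
   Context: $(\mathcal N,\mathcal E)$ is a connected directed graph with $\mathcal N=\{1,\dots,n\}$; $C$ is its incidence matrix ($C_{j,e}=1$ if $e=(j,k)$, $-1$ if $e=(k,j)$, $0$ otherwise). $B$ and $D$ are diagonal with positive diagonal entries. $L:=CBC^T$, $H\in\mathbb{R}^{n\times 2|\mathcal E|}$ with $H^T=\begin{bmatrix} BC^TL^\dagger\\ -BC^TL^\dagger\end{bmatrix}$ ($L^\dagger$ Moore–Penrose inverse), $F=\begin{bmatrix}\overline F\\-\underline F\end{bmatrix}\in\mathbb{R}^{2|\mathcal E|}$, $d\in\mathbb{R}^n$. Each $J_j:\mathbb{R}\to\mathbb{R}$ is strictly convex and twice differentiable. Projection: for vectors $y,u$ of equal length, $([y]^+_u)_j=y_j$ if $y_j>0$ or $u_j>0$, and $0$ otherwise; here $[\cdot]^+_\eta$ is applied to the $\eta$-block of the gradient with $u=\eta$, other blocks unchanged. (This system models generators' quantity-bidding gradient play, market pricing dynamics, and linearized swing dynamics with $\omega\equiv\nu$.) *)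

(* Defs.v *)
From HB Require Import structures.
From mathcomp Require Import all_boot all_order all_algebra.
From mathcomp Require Import all_classical all_reals all_analysis.
Set Implicit Arguments. Unset Strict Implicit. Unset Printing Implicit Defensive.
Import Order.TTheory GRing.Theory Num.Theory.
Local Open Scope ring_scope.

Section Defs.
Variable R : realType.

Definition und_adj (n m : nat) (src dst : 'I_m -> 'I_n) : rel 'I_n :=
  fun j k => [exists e, ((src e == j) && (dst e == k)) || ((src e == k) && (dst e == j))].

Definition graph_connected (n m : nat) (src dst : 'I_m -> 'I_n) : Prop :=
  forall j k : 'I_n, connect (und_adj src dst) j k.

Definition incidence (n m : nat) (src dst : 'I_m -> 'I_n) : 'M[R]_(n, m) :=
  \matrix_(j, e) (if src e == j then 1 else if dst e == j then -1 else 0).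

Definition is_MP_inverse (n : nat) (A X : 'M[R]_n) : Prop :=
  [/\ A *m X *m A = A, X *m A *m X = X,
      (A *m X)^T = A *m X & (X *m A)^T = X *m A].

Definition strictly_convex (f : R -> R) : Prop :=
  forall x y a : R, x != y -> 0 < a < 1 ->
    f (a * x + (1 - a) * y) < a * f x + (1 - a) * f y.

Definition twice_differentiable (f : R -> R) : Prop :=
  forall x : R, derivable f x 1 /\ derivable (derive1 f) x 1.

Definition Hmat (n m : nat) (C : 'M[R]_(n, m)) (B : 'M[R]_m) (Ldag : 'M[R]_n)
  : 'M[R]_(n, m + m) :=
  (col_mx (B *m C^T *m Ldag) (- (B *m C^T *m Ldag)))^T.

Definition Lhat (n m : nat) (J : 'I_n -> R -> R) (D : 'M[R]_n) (C : 'M[R]_(n, m))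
  (B : 'M[R]_m) (H : 'M[R]_(n, m + m)) (F : 'cV[R]_(m + m)) (d : 'cV[R]_n)
  (p : 'cV[R]_n) (th : 'cV[R]_m) (lam : R) (eta : 'cV[R]_(m + m)) (nu : 'cV[R]_n) : R :=
  \sum_(j < n) J j (p j 0)
  - 2^-1 * (nu^T *m D *m nu) 0 0
  + (nu^T *m (p - d - C *m B *m th)) 0 0
  - lam * ((const_mx 1 : 'rV[R]_n) *m (p - d)) 0 0
  + (eta^T *m (H^T *m (p - d) - F)) 0 0.

Definition pderiv (k : nat) (f : 'cV[R]_k -> R) (x : 'cV[R]_k) (i : 'I_k) : R :=
  derive1 (fun s : R => f (x + s *: delta_mx i 0)) 0.

Definition grad (k : nat) (f : 'cV[R]_k -> R) (x : 'cV[R]_k) : 'cV[R]_k :=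
  \col_i pderiv f x i.

Definition proj_pos (k : nat) (y u : 'cV[R]_k) : 'cV[R]_k :=
  \col_j (if (0 < y j 0) || (0 < u j 0) then y j 0 else 0).

Definition dcoord (k : nat) (x : R -> 'cV[R]_k) (i : 'I_k) (t : R) : R :=
  derive1 (fun s => x s i 0) t.

Definition coord_derivable (k : nat) (x : R -> 'cV[R]_k) (i : 'I_k) (t : R) : Prop :=
  derivable (fun s => x s i 0) t 1.

End Defs.

(* Main.v *)
Require Import Defs.
From HB Require Import structures.
From mathcomp Require Import all_boot all_order all_algebra.
From mathcomp Require Import all_classical all_reals all_analysis.
From mathcomp Require Import ring lra.
Import Order.TTheory GRing.Theory Num.Theory.
Import numFieldNormedType.Exports.
Local Open Scope classical_set_scope.
Local Open Scope ring_scope.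
Section S.
Variable R : realType.

Lemma dnbhs0_ex (P : R -> Prop) : (dnbhs (0:R) P) ->
  exists2 e : R, 0 < e & forall h, h != 0 -> `|h| < e -> P h.
Proof.
rewrite /dnbhs /within /= => /nbhs_norm0P [e e0 He].
exists e => // h h0 he; exact: He.
Qed.

Lemma dquot (f : R -> R) t : derivable f t 1 ->
  forall eps, 0 < eps -> exists2 e : R, 0 < e & forall h, h != 0 -> `|h| < e ->
   `|derive1 f t - h^-1 * (f (h + t) - f t)| < eps.
Proof.
move=> df eps eps0.
move: (df) => /cvgr_dist_lt/(_ eps eps0).
move/dnbhs0_ex => [e e0 He]; exists e => // h h0 he.
have := He h h0 he.
rewrite derive1E /derive /=. have hA : (h%:A : R) = h by exact: mulr1.
by rewrite hA.
Qed.

Lemma const_deriv (f : R -> R) t : derivable f t 1 ->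
  (forall s, t <= s -> f s = f t) -> derive1 f t = 0.
Proof.
move=> df fc; apply/eqP/negPn/negP => D0.
have eps0 : 0 < `|derive1 f t| by rewrite normr_gt0.
have [e e0 He] := dquot _ _ df _ eps0.
have hp : 0 < e / 2 by rewrite divr_gt0.
have := He (e/2) (lt0r_neq0 hp).
rewrite gtr0_norm // fc; last by lra.
rewrite subrr mulr0 subr0 ltxx => H; have : e / 2 < e by lra.
by move/H.
Qed.

Lemma strict_min (f : R -> R) x0 c : strictly_convex f ->
  derivable (fun s => c + f (x0 + s)) 0 1 ->
  derive1 (fun s => c + f (x0 + s)) 0 = 0 ->
  forall x, x != x0 -> f x0 < f x.
Proof.
move=> fc df d0.
have weak : forall x, f x0 <= f x.
  move=> x; have [->|xx0] := eqVneq x x0; first by rewrite lexx.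
  rewrite leNgt; apply/negP => fx.
  set hh := x - x0.
  have hh0 : 0 < `|hh| by rewrite normr_gt0 subr_eq0.
  set del := f x0 - f x.
  have del0 : 0 < del by rewrite /del subr_gt0.
  have eps0 : 0 < del / `|hh| by rewrite divr_gt0.
  have [e e0 He] := dquot _ _ df _ eps0.
  set a := Num.min (1/2 : R) (e / (2 * `|hh|)).
  have a0 : 0 < a by rewrite /a lt_min; apply/andP; split; [lra | rewrite divr_gt0 // mulr_gt0].
  have a1 : a < 1 by rewrite /a gt_min; apply/orP; left; lra.
  have ae : a * `|hh| < e.
    have : a <= e / (2 * `|hh|) by rewrite /a ge_min lexx orbT.
    rewrite ler_pdivlMr ?mulr_gt0 // => h; nra.
  set y := a * hh.
  have ny : `|y| = a * `|hh| by rewrite /y normrM gtr0_norm.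
  have y0 : y != 0 by rewrite -normr_gt0 ny mulr_gt0.
  have := He y y0; rewrite ny ae d0 add0r addr0 addr0 => /(_ isT).
  have key : f (x0 + y) < f x0 - a * del.
    have := fc x x0 a xx0; rewrite a0 a1 => /(_ isT).
    have -> : a * x + (1 - a) * x0 = x0 + y by rewrite /y /hh; ring.
    by rewrite /del; lra.
  set Q := y^-1 * _.
  have yQ : f (x0 + y) - f x0 = y * Q by rewrite /Q mulrA divff // mul1r; ring.
  rewrite normrN => HQ.
  have : `|y * Q| < a * del.
    rewrite normrM ny.
    have : `|Q| * `|hh| < del by rewrite -ltr_pdivlMr.
    move=> h1; nra.
  rewrite -yQ ltr_norml; lra.
move=> x xx0.
have := fc x x0 (1/2) xx0; rewrite (_ : 0 < 1/2 < 1); last by apply/andP; split; lra.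
move=> /(_ isT) h; have := weak (1 / 2 * x + (1 - 1 / 2) * x0); lra.
Qed.

Lemma eta_nonneg (f : R -> R) (T g : R) : 0 < T -> g <= 0 -> 0 <= f 0 ->
  (forall t, 0 <= t -> derivable f t 1 /\
     T * derive1 f t = (if (0 < g) || (0 < f t) then g else 0)) ->
  forall t, 0 <= t -> 0 <= f t.
Proof.
move=> T0 g0 f0 hf.
have dle0 : forall t, 0 <= t -> derive1 f t <= 0.
  by move=> t t0; have [_ ] := hf t t0; case: ifP => _ h; nra.
have cont : forall a b, 0 <= a -> {within `[a, b], continuous f}.
  move=> a b a0; apply: derivable_within_continuous => x.
  rewrite in_itv /= => /andP[ax _]; exact: (hf x (le_trans a0 ax)).1.
have mono : forall x y, 0 <= x -> x <= y -> f y <= f x.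
  move=> x y x0 xy; apply: (@ler0_derive1_le_cc _ f x y) => //.
  - by move=> z; rewrite in_itv /= => /andP[xz _]; exact: (hf z (le_trans x0 (ltW xz))).1.
  - by move=> z; rewrite in_itv /= => /andP[xz _]; exact: dle0 (le_trans x0 (ltW xz)).
  - exact: cont.
  - by rewrite in_itv /= lexx xy.
  - by rewrite in_itv /= lexx xy.
move=> t1 t10; rewrite leNgt; apply/negP => ft1.
have hv : Num.min (f 0) (f t1) <= f t1 / 2 <= Num.max (f 0) (f t1).
  rewrite ge_min le_max; apply/andP; split; apply/orP; [right|left]; lra.
have [s sI fs] := @IVT R f 0 t1 (f t1 / 2) t10 (cont 0 t1 (lexx 0)) hv.
move: sI; rewrite in_itv /= => /andP[s0 st1].
have : f s <= f t1.
  apply: (@ger0_derive1_le_cc _ f s t1) => //.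
  - by move=> z; rewrite in_itv /= => /andP[xz _]; exact: (hf z (le_trans s0 (ltW xz))).1.
  - move=> z; rewrite in_itv /= => /andP[sz _].
    have z0 : 0 <= z by apply: le_trans s0 (ltW sz).
    have fz : f z <= f s by apply: mono => //; exact: ltW.
    have [_] := hf z z0; rewrite ifF; first by nra.
    by apply/negbTE; rewrite negb_or -!leNgt g0 /=; lra.
  - exact: cont.
  - by rewrite in_itv /= lexx st1.
  - by rewrite in_itv /= lexx st1.
lra.
Qed.


Lemma dlin (K c x : R) : derive1 (fun s : R => K + s * c) x = c.
Proof.
rewrite derive1E; apply: derive_val; apply: is_derive_eq.
rewrite add0r mul1r scaler0 add0r; exact: mulr1.
Qed.

Lemma dquad (K c q x : R) : x = 0 -> derive1 (fun s : R => K + s * c - 2^-1 * s^+2 * q) x = c.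
Proof.
move=> ->.
rewrite derive1E; apply: derive_val; apply: is_derive_eq.
rewrite add0r mul1r !scale0r add0r addr0 !scaler0 addr0 subr0; exact: mulr1.
Qed.

Lemma m00D (A B : 'M[R]_1) : (A + B) 0 0 = A 0 0 + B 0 0.
Proof. by rewrite mxE. Qed.
Lemma m00N (A : 'M[R]_1) : (- A) 0 0 = - A 0 0.
Proof. by rewrite mxE. Qed.
Lemma m00B (A B : 'M[R]_1) : (A - B) 0 0 = A 0 0 - B 0 0.
Proof. by rewrite !mxE. Qed.
Lemma m00Z (a : R) (A : 'M[R]_1) : (a *: A) 0 0 = a * A 0 0.
Proof. by rewrite mxE. Qed.
Lemma m00T (A : 'M[R]_1) : A^T 0 0 = A 0 0.
Proof. by rewrite mxE. Qed.
Ltac m00 := rewrite ?(m00D, m00N, m00B, m00Z).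

Variables (n m : nat) (J : 'I_n -> R -> R) (D : 'M[R]_n) (C : 'M[R]_(n, m))
  (B : 'M[R]_m) (H : 'M[R]_(n, m + m)) (F : 'cV[R]_(m + m)) (d : 'cV[R]_n).

Definition kap lam (eta : 'cV[R]_(m+m)) (nu : 'cV[R]_n) : 'rV[R]_n :=
  nu^T - lam *: const_mx 1 + eta^T *m H^T.

Lemma L_diff_z p th p' th' lam eta nu :
  Lhat J D C B H F d p th lam eta nu =
  Lhat J D C B H F d p' th' lam eta nu
  + (\sum_(j < n) J j (p j 0) - \sum_(j < n) J j (p' j 0))
  + (kap lam eta nu *m (p - p')) 0 0 - (nu^T *m (C *m B *m (th - th'))) 0 0.
Proof.
rewrite /Lhat /kap.
rewrite !(mulmxBr, mulmxDr, mulmxBl, mulmxDl, mulNmx, mulmxN) -!scalemxAl !mulmxA; m00.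
ring.
Qed.
Lemma trB k l (A1 A2 : 'M[R]_(k,l)) : (A1 - A2)^T = A1^T - A2^T.
Proof. by apply/matrixP => ? ?; rewrite !mxE. Qed.

Lemma L_diff_s p th lam eta nu lam' eta' nu' :
  Lhat J D C B H F d p th lam eta nu =
  Lhat J D C B H F d p th lam' eta' nu'
  - 2^-1 * ((nu^T *m D *m nu) 0 0 - (nu'^T *m D *m nu') 0 0)
  + ((nu - nu')^T *m (p - d - C *m B *m th)) 0 0
  - (lam - lam') * ((const_mx 1 : 'rV[R]_n) *m (p - d)) 0 0
  + ((eta - eta')^T *m (H^T *m (p - d) - F)) 0 0.
Proof.
rewrite /Lhat !trB !(mulmxBl); m00. ring.
Qed.

Lemma trZ k l (a : R) (A : 'M[R]_(k,l)) : (a *: A)^T = a *: A^T.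
Proof. by apply/matrixP => ? ?; rewrite !mxE. Qed.
Lemma trD k l (A1 A2 : 'M[R]_(k,l)) : (A1 + A2)^T = A1^T + A2^T.
Proof. by apply/matrixP => ? ?; rewrite !mxE. Qed.

Lemma m00zero : (0 : 'M[R]_1) 0 0 = 0.
Proof. by rewrite mxE. Qed.

Lemma colE00 k (u : 'rV[R]_k) i : (u *m (delta_mx i 0 : 'cV[R]_k)) 0 0 = u 0 i.
Proof. by rewrite -colE mxE. Qed.

Lemma rowE00 k (g : 'cV[R]_k) i : ((delta_mx i 0 : 'cV[R]_k)^T *m g) 0 0 = g i 0.
Proof. by rewrite trmx_delta -rowE mxE. Qed.

Lemma pderiv_th p th lam eta nu i :
  pderiv (fun x => Lhat J D C B H F d p x lam eta nu) th i
  = - (nu^T *m (C *m B *m delta_mx i (0:'I_1))) 0 0.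
Proof.
rewrite /pderiv.
have -> : (fun s => Lhat J D C B H F d p (th + s *: delta_mx i (0:'I_1)) lam eta nu) =
  (fun s => Lhat J D C B H F d p th lam eta nu + s * (- (nu^T *m (C *m B *m delta_mx i (0:'I_1))) 0 0)).
  apply: funext => s; rewrite (L_diff_z p (th + s *: delta_mx i (0:'I_1)) p th).
  rewrite !subrr mulmx0 (addrC th) addrK -!scalemxAr m00Z mxE; ring.
by rewrite dlin.
Qed.

Lemma pderiv_eta p th lam eta nu i :
  pderiv (fun x => Lhat J D C B H F d p th lam x nu) eta i
  = (H^T *m (p - d) - F) i 0.
Proof.
rewrite /pderiv.
have -> : (fun s => Lhat J D C B H F d p th lam (eta + s *: delta_mx i (0:'I_1)) nu) =
  (fun s => Lhat J D C B H F d p th lam eta nu + s * (H^T *m (p - d) - F) i 0).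
  apply: funext => s; rewrite (L_diff_s p th lam (eta + s *: delta_mx i (0:'I_1)) nu lam eta nu).
  rewrite !subrr (addrC eta) addrK trZ -scalemxAl m00Z rowE00 trmx0 !mul0mx !mxE; ring.
by rewrite dlin.
Qed.

Lemma derive_lam p th lam eta nu :
  derive1 (fun l => Lhat J D C B H F d p th l eta nu) lam
  = - ((const_mx 1 : 'rV[R]_n) *m (p - d)) 0 0.
Proof.
have -> : (fun l => Lhat J D C B H F d p th l eta nu) =
  (fun l => (Lhat J D C B H F d p th lam eta nu + lam * ((const_mx 1 : 'rV[R]_n) *m (p - d)) 0 0)
       + l * (- ((const_mx 1 : 'rV[R]_n) *m (p - d)) 0 0)).
  apply: funext => l; rewrite (L_diff_s p th l eta nu lam eta nu).
  rewrite !subrr !trmx0 !mul0mx !mxE; ring.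
by rewrite dlin.
Qed.

Lemma pderiv_nu p th lam eta nu i : D^T = D ->
  pderiv (fun x => Lhat J D C B H F d p th lam eta x) nu i
  = (p - d - C *m B *m th) i 0 - (D *m nu) i 0.
Proof.
move=> DT; rewrite /pderiv.
set e := delta_mx i (0:'I_1) : 'cV[R]_n.
have sym : (nu^T *m D *m e) 0 0 = (e^T *m D *m nu) 0 0.
  by rewrite -m00T !trmx_mul trmxK DT mulmxA.
have -> : (fun s => Lhat J D C B H F d p th lam eta (nu + s *: e)) =
  (fun s => Lhat J D C B H F d p th lam eta nu + s * ((p - d - C *m B *m th) i 0 - (D *m nu) i 0)
     - 2^-1 * s^+2 * (e^T *m D *m e) 0 0).
  apply: funext => s; rewrite (L_diff_s p th lam eta (nu + s *: e) lam eta nu).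
  rewrite !subrr !trmx0 !mul0mx (addrC nu) addrK.
  have Q : ((s *: e + nu)^T *m D *m (s *: e + nu)) 0 0 = s * (s * (e^T *m D *m e) 0 0)
     + s * (nu^T *m D *m e) 0 0 + s * (e^T *m D *m nu) 0 0 + (nu^T *m D *m nu) 0 0.
    rewrite trD trZ !(mulmxDl, mulmxDr) -?scalemxAl -?scalemxAr -?scalemxAl; m00; ring.
  have A : ((s *: e)^T *m (p - d - C *m B *m th)) 0 0 = s * (p - d - C *m B *m th) i 0.
    by rewrite trZ -scalemxAl m00Z rowE00.
  have DN : (e^T *m D *m nu) 0 0 = (D *m nu) i 0 by rewrite -mulmxA rowE00.
  rewrite Q A sym DN m00zero; field; by [].
by rewrite dquad.
Qed.

Lemma sumJ_shift (p : 'cV[R]_n) i s :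
  \sum_(j < n) J j ((p + s *: delta_mx i (0:'I_1)) j 0) =
  \sum_(j < n) J j (p j 0) + (J i (p i 0 + s) - J i (p i 0)).
Proof.
rewrite (bigD1 i) //= [in RHS](bigD1 i) //=.
rewrite !mxE eqxx mulr1.
have -> : \sum_(j < n | j != i) J j ((p + s *: delta_mx i (0:'I_1)) j 0) =
          \sum_(j < n | j != i) J j (p j 0).
  by apply: eq_bigr => j ji; rewrite !mxE (negbTE ji) mulr0 addr0.
ring.
Qed.

Lemma Lp_shift p th lam eta nu i :
  (fun s => Lhat J D C B H F d (p + s *: delta_mx i (0:'I_1)) th lam eta nu) =
  (fun s => (Lhat J D C B H F d p th lam eta nu - (J i (p i 0) + kap lam eta nu 0 i * p i 0))
     + (J i (p i 0 + s) + kap lam eta nu 0 i * (p i 0 + s))).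
Proof.
apply: funext => s; rewrite (L_diff_z (p + s *: delta_mx i (0:'I_1)) th p th).
have -> : p + s *: delta_mx i (0:'I_1) - p = s *: delta_mx i (0:'I_1) by rewrite addrC addKr.
rewrite sumJ_shift !subrr !mulmx0 m00zero -scalemxAr m00Z colE00 /kap; ring.
Qed.

Lemma derivable_sh (f : R -> R) x0 : derivable f x0 1 -> derivable (fun s => f (x0 + s)) 0 1.
Proof.
rewrite /derivable /=.
suff -> : (fun h : R => h^-1 *: (f (x0 + (h *: 1 + 0)) - f (x0 + 0))) = (fun h => h^-1 *: (f (h *: 1 + x0) - f x0)) by [].
by apply: funext => h; rewrite !addr0 [_ + x0]addrC.
Qed.
Lemma strict_min' (J0 : R -> R) k x0 c : strictly_convex (fun x => J0 x + k * x) ->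
  derivable (fun s => c + (J0 (x0 + s) + k * (x0 + s))) 0 1 ->
  derive1 (fun s => c + (J0 (x0 + s) + k * (x0 + s))) 0 = 0 ->
  forall x, x != x0 -> J0 x0 + k * x0 < J0 x + k * x.
Proof. move=> cv dv d0 x xne. exact: (strict_min (fun x => J0 x + k * x) x0 c cv dv d0 x xne). Qed.

Lemma derivable_aff (f : R -> R) x0 c k : derivable f x0 1 ->
  derivable (fun s => c + (f (x0 + s) + k * (x0 + s))) 0 1.
Proof.
move=> df.
have h1 : derivable (fun s => f (x0 + s)) 0 1 by exact: derivable_sh.
have h2 : derivable (fun s : R => k * (x0 + s)) 0 1.
  apply: ex_derive; apply: is_derive_eq; reflexivity.
have h3 : derivable (fun s : R => c) 0 1 by exact: derivable_cst.
exact: derivableD h3 (derivableD h1 h2).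
Qed.

Lemma pderiv_p p th lam eta nu i :
  pderiv (fun x => Lhat J D C B H F d x th lam eta nu) p i =
  derive1 (fun s => (Lhat J D C B H F d p th lam eta nu - (J i (p i 0) + kap lam eta nu 0 i * p i 0))
     + (J i (p i 0 + s) + kap lam eta nu 0 i * (p i 0 + s))) 0.
Proof. by rewrite /pderiv Lp_shift. Qed.

Lemma grad_entry k (f : 'cV[R]_k -> R) x : grad f x = 0 -> forall i, pderiv f x i = 0.
Proof. by move/matrixP => h i; have := h i 0; rewrite !mxE. Qed.

Lemma dot00 k (u v : 'cV[R]_k) : (u^T *m v) 0 0 = \sum_j u j 0 * v j 0.
Proof. by rewrite mxE; apply: eq_bigr => j _; rewrite mxE. Qed.

Lemma quad_id (u v : 'cV[R]_n) : D^T = D ->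
  ((u + v)^T *m D *m (u + v)) 0 0 - (v^T *m D *m v) 0 0
  = (u^T *m D *m u) 0 0 + 2 * (u^T *m (D *m v)) 0 0.
Proof.
move=> DT.
have sym : (v^T *m D *m u) 0 0 = (u^T *m D *m v) 0 0.
  by rewrite -m00T !trmx_mul trmxK DT mulmxA.
rewrite trD !(mulmxDl, mulmxDr); m00; rewrite sym mulmxA; ring.
Qed.

Lemma grad_eta p th lam eta nu :
  grad (fun x => Lhat J D C B H F d p th lam x nu) eta = H^T *m (p - d) - F.
Proof. by apply/matrixP => i j; rewrite (ord1 j) /grad mxE pderiv_eta. Qed.

Lemma proj_zero k (y u : 'cV[R]_k) : (forall i, 0 <= u i 0) -> proj_pos y u = 0 ->
  forall i, y i 0 <= 0 /\ u i 0 * y i 0 = 0.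
Proof.
move=> hu /matrixP h i; have := h i 0; rewrite /proj_pos !mxE.
case: ifP => [_ ->|/negbT]; first by rewrite lexx mulr0.
rewrite negb_or -!leNgt => /andP[y0 u0] _.
have -> : u i 0 = 0 by apply/le_anti; rewrite u0 hu.
by rewrite y0 mul0r.
Qed.

Lemma proj_entry k (y u : 'cV[R]_k) i :
  proj_pos y u i 0 = if (0 < y i 0) || (0 < u i 0) then y i 0 else 0.
Proof. by rewrite /proj_pos mxE. Qed.

Lemma mulE00 k (u : 'rV[R]_k) (v : 'cV[R]_k) : (u *m v) 0 0 = \sum_j u 0 j * v j 0.
Proof. by rewrite mxE. Qed.

Lemma cvB k (u v : 'cV[R]_k) j : (u - v) j 0 = u j 0 - v j 0.
Proof. by rewrite !mxE. Qed.
End S.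
Arguments grad_entry {R k f x}.

Theorem proposition1 (R : realType) (n m : nat)
  (src dst : 'I_m -> 'I_n)
  (hloop : forall e, src e != dst e)
  (hsimple : forall e e', src e = src e' -> dst e = dst e' -> e = e')
  (hconn : graph_connected src dst)
  (b : 'I_m -> R) (hb : forall e, 0 < b e)
  (dD : 'I_n -> R) (hD : forall j, 0 < dD j)
  (Ldag : 'M[R]_n)
  (hLdag : is_MP_inverse (incidence R src dst *m diag_mx (\row_e b e)
                            *m (incidence R src dst)^T) Ldag)
  (Fbar Funder : 'cV[R]_m) (d : 'cV[R]_n)
  (J : 'I_n -> R -> R)
  (hJconv : forall j, strictly_convex (J j))
  (hJdiff : forall j, twice_differentiable (J j))
  (Tp : 'I_n -> R) (Tth : 'I_m -> R) (Tlam : R) (Teta : 'I_(m + m) -> R)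
  (Tnu : 'I_n -> R)
  (hTp : forall i, 0 < Tp i) (hTth : forall i, 0 < Tth i) (hTlam : 0 < Tlam)
  (hTeta : forall i, 0 < Teta i) (hTnu : forall i, 0 < Tnu i)
  (ps : 'cV[R]_n) (ths : 'cV[R]_m) (lams : R) (etas : 'cV[R]_(m + m))
  (nus : 'cV[R]_n)
  (p : R -> 'cV[R]_n) (th : R -> 'cV[R]_m) (lam : R -> R)
  (eta : R -> 'cV[R]_(m + m)) (nu : R -> 'cV[R]_n) :
  let C := incidence R src dst in
  let B := diag_mx (\row_e b e) in
  let D := diag_mx (\row_j dD j) in
  let H := Hmat C B Ldag in
  let F := col_mx Fbar (- Funder) in
  let L := Lhat J D C B H F d in
  (* equilibrium (zs, sigmas) with etas >= 0 *)
  (forall j, 0 <= etas j 0) ->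
  grad (fun x => L x ths lams etas nus) ps = 0 ->
  grad (fun x => L ps x lams etas nus) ths = 0 ->
  derive1 (fun l => L ps ths l etas nus) lams = 0 ->
  proj_pos (grad (fun x => L ps ths lams x nus) etas) etas = 0 ->
  grad (fun x => L ps ths lams etas x) nus = 0 ->
  (* trajectory of the closed-loop system for t >= 0, with eta(0) >= 0 *)
  (forall j, 0 <= eta 0 j 0) ->
  (forall t, 0 <= t ->
     (forall i, coord_derivable p i t /\
        Tp i * dcoord p i t
        = - grad (fun x => L x (th t) (lam t) (eta t) (nu t)) (p t) i 0) /\
     (forall i, coord_derivable th i t /\
        Tth i * dcoord th i t
        = - grad (fun x => L (p t) x (lam t) (eta t) (nu t)) (th t) i 0) /\
     (derivable lam t 1 /\
        Tlam * derive1 lam t = derive1 (fun l => L (p t) (th t) l (eta t) (nu t)) (lam t)) /\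
     (forall i, coord_derivable eta i t /\
        Teta i * dcoord eta i t
        = proj_pos (grad (fun x => L (p t) (th t) (lam t) x (nu t)) (eta t))
                   (eta t) i 0) /\
     (forall i, coord_derivable nu i t /\
        Tnu i * dcoord nu i t
        = grad (fun x => L (p t) (th t) (lam t) (eta t) x) (nu t) i 0)) ->
  (* invariance of the Lagrangian along the trajectory *)
  (forall t, 0 <= t -> L ps ths (lam t) (eta t) (nu t) = L ps ths lams etas nus) ->
  (forall t, 0 <= t -> L (p t) (th t) lams etas nus = L ps ths lams etas nus) ->
  (* conclusion: zdot = 0 and sigmadot = 0 for all t >= 0 *)
  forall t, 0 <= t ->
    (forall i, dcoord p i t = 0) /\ (forall i, dcoord th i t = 0) /\
    derive1 lam t = 0 /\ (forall i, dcoord eta i t = 0) /\ (forall i, dcoord nu i t = 0).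
Proof.
move=> C B D H F L; rewrite /L.
move=> hetas gp gth glam geta gnu eta0 traj invs invz t t0.
have DT : D^T = D by rewrite /D tr_diag_mx.
have hth : forall i, (nus^T *m (C *m B *m delta_mx i (0:'I_1))) 0 0 = 0.
  move=> i; have := grad_entry gth i; rewrite pderiv_th => /eqP.
  by rewrite oppr_eq0 => /eqP.
have hw : forall v : 'cV[R]_m, (nus^T *m (C *m B *m v)) 0 0 = 0.
  move=> v.
  have Z : nus^T *m (C *m B) = 0.
    apply/matrixP => a j; rewrite (ord1 a) [RHS]mxE -colE00 -mulmxA; exact: hth.
  by rewrite mulmxA Z mul0mx m00zero.
have hlam : ((const_mx 1 : 'rV[R]_n) *m (ps - d)) 0 0 = 0.
  by move: glam; rewrite derive_lam => /eqP; rewrite oppr_eq0 => /eqP.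
pose g := H^T *m (ps - d) - F.
have hg : forall i, g i 0 <= 0 /\ etas i 0 * g i 0 = 0.
  by have := proj_zero _ _ _ _ hetas geta; rewrite grad_eta.
have ha : ps - d - C *m B *m ths = D *m nus.
  apply/matrixP => i j; rewrite (ord1 j).
  have := grad_entry gnu i; rewrite pderiv_nu // => /eqP.
  by rewrite subr_eq0 => /eqP.
pose k := kap _ _ _ H lams etas nus.
have hp : forall i x, x != ps i 0 -> J i (ps i 0) + k 0 i * ps i 0 < J i x + k 0 i * x.
  move=> i x xne.
  have d0 := grad_entry gp i.
  rewrite pderiv_p in d0.
  rewrite -/k in d0.
  have cv : strictly_convex (fun x => J i x + k 0 i * x).
    move=> y z a yz a01.
    have := hJconv i y z a yz a01.
    have -> : a * (J i y + k 0 i * y) + (1 - a) * (J i z + k 0 i * z) =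
       (a * J i y + (1 - a) * J i z) + k 0 i * (a * y + (1 - a) * z) by ring.
    by rewrite ltrD2r.
  have dv := derivable_aff _ (J i) (ps i 0)
    (Lhat J D C B H F d ps ths lams etas nus - (J i (ps i 0) + k 0 i * ps i 0))
    (k 0 i) (hJdiff i (ps i 0)).1.
  exact: (strict_min' _ (J i) (k 0 i) (ps i 0) _ cv dv d0 x xne).
have pt : forall s, 0 <= s -> p s = ps.
  move=> s s0.
  have E := invz s s0.
  rewrite (L_diff_z _ _ _ _ _ _ _ _ _ _ (p s) (th s) ps ths) hw -/k in E.
  have E' : (\sum_j J j (p s j 0) - \sum_j J j (ps j 0)) + (k *m (p s - ps)) 0 0 = 0.
    by move: E; lra.
  have Hs : \sum_j ((J j (p s j 0) + k 0 j * p s j 0) - (J j (ps j 0) + k 0 j * ps j 0)) = 0.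
    apply: eq_trans _ E'; rewrite -sumrB mulE00 -big_split /=; apply: eq_bigr => j _; rewrite cvB; ring.
  have Hnn : forall j, true -> 0 <= (J j (p s j 0) + k 0 j * p s j 0) - (J j (ps j 0) + k 0 j * ps j 0).
    move=> j _; have [->|ne] := eqVneq (p s j 0) (ps j 0); first by rewrite subrr.
    by rewrite subr_ge0 ltW // hp.
  have Z := psumr_eq0P Hnn Hs.
  apply/matrixP => j a; rewrite (ord1 a); apply/eqP/negPn/negP => ne.
  have := hp j _ ne; have := Z j isT; lra.
have etapos : forall s, 0 <= s -> forall j, 0 <= eta s j 0.
  move=> s s0 j.
  apply: (eta_nonneg _ (fun s => eta s j 0) (Teta j) (g j 0) (hTeta j) (hg j).1 (eta0 j)) => // u u0.
  have [hd he] := (traj u u0).2.2.2.1 j.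
  split; first exact: hd.
  by move: he; rewrite /dcoord grad_eta (pt u u0) proj_entry.
have key : forall s, 0 <= s -> nu s = nus /\ forall j, eta s j 0 * g j 0 = 0.
  move=> s s0.
  have E := invs s s0.
  rewrite (L_diff_s _ _ _ _ _ _ _ _ _ _ ps ths (lam s) (eta s) (nu s) lams etas nus) hlam -/g ha in E.
  set w := nu s - nus in E.
  have nuw : nu s = w + nus by rewrite /w subrK.
  rewrite nuw (quad_id _ _ D w nus DT) in E.
  have etag : ((eta s - etas)^T *m g) 0 0 = \sum_j eta s j 0 * g j 0.
    by rewrite dot00; apply: eq_bigr => j _; rewrite cvB mulrBl (hg j).2 subr0.
  have wDw : (w^T *m D *m w) 0 0 = \sum_j dD j * w j 0 ^+ 2.
    by rewrite /D mul_mx_diag mxE; apply: eq_bigr => j _; rewrite !mxE; ring.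
  rewrite etag wDw in E.
  have S1ge : 0 <= \sum_j dD j * w j 0 ^+ 2.
    by apply: sumr_ge0 => j _; rewrite mulr_ge0 // ?sqr_ge0 // ltW.
  have S2le : \sum_j eta s j 0 * g j 0 <= 0.
    by rewrite -oppr_ge0 -sumrN; apply: sumr_ge0 => j _; rewrite oppr_ge0 mulr_ge0_le0 // ?etapos // (hg j).1.
  have S1 : \sum_j dD j * w j 0 ^+ 2 = 0 by lra.
  have S2 : \sum_j - (eta s j 0 * g j 0) = 0 by rewrite sumrN; lra.
  split.
    apply/matrixP => j a; rewrite (ord1 a).
    have Hn : forall j, true -> 0 <= dD j * w j 0 ^+ 2.
      by move=> j' _; rewrite mulr_ge0 // ?sqr_ge0 // ltW.
    have := psumr_eq0P Hn S1; move=> /(_ j isT) /eqP.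
    rewrite mulf_eq0 (gt_eqF (hD j)) /= expf_eq0 /= /w cvB subr_eq0 => /eqP.
    by [].
  have Hn2 : forall j, true -> 0 <= - (eta s j 0 * g j 0).
    by move=> j' _; rewrite oppr_ge0 mulr_ge0_le0 // ?etapos // (hg j').1.
  move=> j; have := psumr_eq0P Hn2 S2; move=> /(_ j isT) /eqP.
  by rewrite oppr_eq0 => /eqP.
have [nut etag] := key t t0.
split.
  move=> i; rewrite /dcoord; apply: const_deriv; first exact: ((traj t t0).1 i).1.
  by move=> s ts; rewrite !pt // (le_trans t0 ts).
split.
  move=> i; have [_ h] := (traj t t0).2.1 i; move: h.
  rewrite /grad mxE pderiv_th nut hth !oppr0 => /eqP.
  by rewrite mulf_eq0 (gt_eqF (hTth i)) /= => /eqP.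
split.
  have [_ h] := (traj t t0).2.2.1; move: h.
  rewrite derive_lam (pt t t0) hlam oppr0 => /eqP.
  by rewrite mulf_eq0 (gt_eqF hTlam) /= => /eqP.
split.
  move=> i; have [_ h] := (traj t t0).2.2.2.1 i; move: h.
  rewrite grad_eta (pt t t0) -/g proj_entry.
  case: ifP => [/orP[gpos|epos]|_] h.
  - by move: gpos; rewrite ltNge (hg i).1.
  - have gi : g i 0 = 0.
      by have /eqP := etag i; rewrite mulf_eq0 (gt_eqF epos) /= => /eqP.
    by move/eqP: h; rewrite gi mulf_eq0 (gt_eqF (hTeta i)) /= => /eqP.
  - by move/eqP: h; rewrite mulf_eq0 (gt_eqF (hTeta i)) /= => /eqP.
move=> i; rewrite /dcoord; apply: const_deriv; first exact: ((traj t t0).2.2.2.2 i).1.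
by move=> s ts; have [-> _] := key s (le_trans t0 ts); rewrite nut.
Qed.
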